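(* For each positive integer $n$, let $P_n=(n, n-1,\ldots,1)$. Then the pair $(P_n,P_n)$ is bigraphic, and every bipartite graph realizing $(P_n,P_n)$ is a mirror bipartite graph; that is, $\mathrm{Bipp}(P_n,P_n)=\mathrm{Mirr}(P_n,P_n)$.
   Context: For sequences $P,Q$ of nonnegative integers, a bipartite graph $G=(V_1\cup V_2,E)$ (with stable sets $V_1,V_2$) realizes $(P,Q)$ if the degrees of the vertices of $V_1$ are the elements of $P$ and the degrees of the vertices of $V_2$ are the elements of $Q$; $(P,Q)$ is bigraphic if such a $G$ exists. A bipartite graph $G=(V_1\cup V_2,E)$ is mirror if there is a bijection $\varphi:V_1\to V_2$ with $u\varphi(v)\in E \iff \varphi(u)v\in E$ for all $u,v\in V_1$. $\mathrm{Bipp}(P,P)$ denotes the set of bipartite graphs (up to isomorphism) realizing $(P,P)$, and $\mathrm{Mirr}(P,P)$ the set of mirror bipartite graphs (up to isomorphism) realizing $(P,P)$. *)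

(* Defs.v *)
From mathcomp Require Import all_boot.
Set Implicit Arguments. Unset Strict Implicit. Unset Printing Implicit Defensive.

(* A (simple) bipartite graph G = (V1 ∪ V2, E) with stable sets V1, V2 is
   given by finite vertex types V1, V2 and an adjacency relation
   E : V1 -> V2 -> bool (u ∈ V1 is adjacent to v ∈ V2 iff E u v). *)

Definition deg1 (V1 V2 : finType) (E : V1 -> V2 -> bool) (u : V1) : nat :=
  #|[set v : V2 | E u v]|.

Definition deg2 (V1 V2 : finType) (E : V1 -> V2 -> bool) (v : V2) : nat :=
  #|[set u : V1 | E u v]|.

Definition realizes (V1 V2 : finType) (E : V1 -> V2 -> bool)
  (P Q : seq nat) : Prop :=
  perm_eq [seq deg1 E u | u <- enum V1] P /\
  perm_eq [seq deg2 E v | v <- enum V2] Q.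

Definition bigraphic (P Q : seq nat) : Prop :=
  exists (V1 V2 : finType) (E : V1 -> V2 -> bool), realizes E P Q.

Definition mirror (V1 V2 : finType) (E : V1 -> V2 -> bool) : Prop :=
  exists phi : V1 -> V2, bijective phi /\
    forall u v : V1, E u (phi v) = E v (phi u).

Definition Pn (n : nat) : seq nat := rev (iota 1 n).

(* Main.v *)
Require Import Defs.
From mathcomp Require Import all_boot.
From mathcomp Require Import zify.
Lemma cnt (V : finType) (f : V -> nat) (P : pred nat) :
  #|[set x | P (f x)]| = count P (map f (enum V)).
Proof. rewrite cardsE cardE count_map -size_filter /enum_mem.
by rewrite filter_predT. Qed.

Lemma cntiota k n : count (fun i => k <= i) (iota 0 n) = n - k.
Proof.
elim: n => [//|n IH]; rewrite -addn1 iotaD count_cat IH /=. 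
case: (leqP k n) => h /=; lia.
Qed.

Lemma cntP k n : count (fun i => k < i) (rev (iota 1 n)) = n - k.
Proof. by rewrite count_rev (iotaDl 1 0) count_map -cntiota. Qed.

Lemma Pn_uniq n : uniq (Pn n).
Proof. by rewrite /Pn rev_uniq iota_uniq. Qed.

Lemma mem_Pn n d : (d \in Pn n) = (0 < d <= n).
Proof. by rewrite /Pn mem_rev mem_iota; lia. Qed.

Section Real.
Variables (n : nat) (V : finType) (f : V -> nat).
Hypothesis H : perm_eq (map f (enum V)) (Pn n).

Lemma cardf (P : pred nat) : #|[set x | P (f x)]| = count P (Pn n).
Proof. by rewrite cnt; apply/permP. Qed.

Lemma rangef x : 0 < f x <= n.
Proof. by rewrite -mem_Pn -(perm_mem H); apply: map_f; rewrite mem_enum. Qed.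

Lemma injf : injective f.
Proof.
move=> x y fxy.
have : #|[set z | f z == f x]| <= 1.
  by rewrite (cardf (pred1 (f x))) (count_uniq_mem _ (Pn_uniq n)) leq_b1.
move/card_le1_eqP; apply; rewrite inE ?fxy //.
Qed.

Lemma surjf d : d \in Pn n -> exists x, f x == d.
Proof.
rewrite -(perm_mem H) => /mapP [x _ ->]; by exists x.
Qed.
End Real.
Arguments cardf {n V f}.
Arguments rangef {n V f}.
Arguments injf {n V f}.
Arguments surjf {n V f}.

Lemma key (n : nat) (V1 V2 : finType) (E : V1 -> V2 -> bool) :
  realizes E (Pn n) (Pn n) ->
  forall u v, E u v = (n < deg1 E u + deg2 E v).
Proof.
move=> [H1 H2].
set a := deg1 E; set b := deg2 E.
have ra : forall x, 0 < a x <= n := rangef H1.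
have rb : forall x, 0 < b x <= n := rangef H2.
have C : forall k, k <= n -> forall u v, (n - k < a u) || (b v <= k) ->
    E u v = (n < a u + b v).
  elim => [_ u v|k IH hk].
    by have := ra u; have := rb v; case/andP => ? ? /andP [? ?] /orP [] ?; exfalso; lia.
  have IH' := IH (ltnW hk).
  have Lu : forall u, a u = n - k -> forall v, E u v = (k < b v).
    move=> u hu.
    have sub : [set v | E u v] \subset [set v | k < b v].
      apply/subsetP => v; rewrite !inE => Euv.
      rewrite ltnNge; apply/negP => hb.
      have := IH' u v; rewrite hb orbT Euv hu => /(_ isT); lia.
    have := subset_cardP _ sub.
    rewrite (cardf H2 (fun i => k < i)) cntP.
    have -> : #|[set v | E u v]| = n - k by rewrite -hu.
    move=> /(_ erefl) eqs v; have := eqs v; by rewrite !inE.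
  have Lv : forall v, b v = k.+1 -> forall u, E u v = (n - k.+1 < a u).
    move=> v hv.
    have sub : [set u | n - k.+1 < a u] \subset [set u | E u v].
      apply/subsetP => u; rewrite !inE => hu.
      have [e|ne] := eqVneq (a u) (n - k).
        by rewrite (Lu u e) hv.
      rewrite IH' ?hv; [lia|]. apply/orP; left; lia.
    have := subset_cardP _ sub.
    rewrite (cardf H1 (fun i => n - k.+1 < i)) cntP.
    have -> : #|[set u | E u v]| = k.+1 by rewrite -hv.
    have -> : n - (n - k.+1) = k.+1 by lia.
    move=> /(_ erefl) eqs u; have := eqs u; by rewrite !inE.
  move=> u v hp.
  case hq : ((n - k < a u) || (b v <= k)); first exact: IH'.
  move/negbT: hq; rewrite negb_or -!ltnNge => /andP [h1 h2].
  case/orP: hp => hp.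
    have e : a u = n - k by lia.
    rewrite (Lu u e) e; lia.
  have e : b v = k.+1 by lia.
  rewrite (Lv v e) e; lia.
move=> u v; apply: (C n (leqnn n)).
by have := rb v; case/andP => _ ->; rewrite orbT.
Qed.

Theorem lemma3 (n : nat) (hn : 0 < n) :
  bigraphic (Pn n) (Pn n) /\
  (forall (V1 V2 : finType) (E : V1 -> V2 -> bool),
     realizes E (Pn n) (Pn n) -> mirror E).
Proof.
split.
  pose E := fun (i j : 'I_n) => n <= i + j + 1.
  exists 'I_n, 'I_n, E.
  have dg : forall (g : 'I_n -> nat),
      (forall i, g i = #|[set j : 'I_n | n - (val i).+1 <= val j]|) ->
      perm_eq (map g (enum 'I_n)) (Pn n).
    move=> g hg.
    have -> : map g (enum 'I_n) = iota 1 n.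
      rewrite (eq_map (g := fun i : 'I_n => (val i).+1)); last first.
        move=> i; rewrite hg (@cnt _ val (fun j => n - (val i).+1 <= j)).
        rewrite val_enum_ord cntiota; have := ltn_ord i; change (\val i) with (nat_of_ord i); lia.
      by rewrite (map_comp succn val) val_enum_ord (iotaDl 1 0).
    by rewrite /Pn perm_sym perm_rev.
  split; apply: dg => i; apply: eq_card => j; rewrite !inE /E /=; change (\val i) with (nat_of_ord i); change (\val j) with (nat_of_ord j); lia.
move=> V1 V2 E hr.
have [H1 H2] := hr.
have K := @key n _ _ E hr.
have exb : forall u, exists v, deg2 E v == deg1 E u.
  move=> u; apply: (surjf H2); rewrite mem_Pn; exact: (rangef H1).
have exa : forall v, exists u, deg1 E u == deg2 E v.
  move=> v; apply: (surjf H1); rewrite mem_Pn; exact: (rangef H2).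
pose phi u := xchoose (exb u).
pose psi v := xchoose (exa v).
have hphi u : deg2 E (phi u) = deg1 E u by apply/eqP; exact: (xchooseP (exb u)).
have hpsi v : deg1 E (psi v) = deg2 E v by apply/eqP; exact: (xchooseP (exa v)).
exists phi; split.
  exists psi => [u|v].
    by apply: (injf H1); rewrite hpsi hphi.
  by apply: (injf H2); rewrite hphi hpsi.
by move=> u v; rewrite !K !hphi addnC.
Qed.
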